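(* Let $s\colon M\to TM\setminus 0$ be a smooth section such that the pullback metric $s^*g$, with components $(s^*g)_{\alpha\beta}(x)=g_{\alpha\beta}(x,s(x))$, is non-degenerate (this holds since $g$ is non-degenerate). Let $\nabla^{s^*g}$ be the Levi-Civita connection of $s^*g$ on $M$, with coefficients $(\nabla^{s^*g})^\alpha_{\beta\gamma}$, and let $\overset{s}{\nabla}{}^{\mathrm{ChR}}$ be the linear connection on $M$ with coefficients $\Gamma^\alpha_{\beta\gamma}(x,s(x))$ (the pullback of the Chern–Rund connection). Then in every chart \[ (\nabla^{s^*g})^\alpha_{\beta\gamma}-\Gamma^\alpha_{\beta\gamma}(x,s(x))=C^\alpha_{\mu\gamma}\,D_\beta s^\mu+C^\alpha_{\mu\beta}\,D_\gamma s^\mu-C_{\mu\beta\gamma}\,g^{\alpha\delta}D_\delta s^\mu, \] where all of $C$, $g$, $g^{-1}$ are evaluated at $(x,s(x))$. Equivalently, for all vector fields $X,Y$ on $M$, \[ \nabla^{s^*g}_XY-\overset{s}{\nabla}{}^{\mathrm{ChR}}_XY=C(D_Ys,X)+C(D_Xs,Y)-g\big(C(X,Y),Ds\big)^\sharp, \] where $C(U,V)$ denotes the vector with components $C^\alpha_{\mu\nu}U^\mu V^\nu$, $g(C(X,Y),Ds)^\sharp$ the vector with components $g^{\alpha\delta}C_{\mu\beta\gamma}X^\beta Y^\gamma D_\delta s^\mu$, and $C$, $g$ stand for their pullbacks by $s$.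
   Context: $M$ is a smooth $n$-manifold, $E=TM\setminus 0$, and $\{x^\mu,y^\mu\}$ are the coordinates on $TM$ induced by coordinates $\{x^\mu\}$ on $M$. A pseudo-Finsler Lagrangian is a smooth $\mathscr{L}\colon E\to\mathbb{R}$ with $\mathscr{L}(x,ty)=t^2\mathscr{L}(x,y)$ for all $t>0$, whose Finsler metric $g_{\mu\nu}=\partial^2\mathscr{L}/\partial y^\mu\partial y^\nu$ is non-degenerate (any signature); $g^{\mu\nu}$ is its inverse and indices are raised/lowered with $g$. Cartan torsion: $C_{\alpha\beta\gamma}=\tfrac12\partial g_{\beta\gamma}/\partial y^\alpha$. Spray: $2G^\alpha=g^{\alpha\delta}\big(\frac{\partial^2\mathscr{L}}{\partial x^\gamma\partial y^\delta}y^\gamma-\frac{\partial\mathscr{L}}{\partial x^\delta}\big)$; nonlinear connection $N^\alpha_\mu=\partial G^\alpha/\partial y^\mu$; $\frac{\delta}{\delta x^\mu}=\frac{\partial}{\partial x^\mu}-N^\nu_\mu\frac{\partial}{\partial y^\nu}$. Chern–Rund (= Cartan horizontal) coefficients: $\Gamma^\alpha_{\beta\gamma}=\tfrac12 g^{\alpha\sigma}\big(\frac{\delta g_{\sigma\gamma}}{\delta x^\beta}+\frac{\delta g_{\sigma\beta}}{\delta x^\gamma}-\frac{\delta g_{\beta\gamma}}{\delta x^\sigma}\big)$. For a section $s\colon M\to E$, $D_\alpha s^\mu=\frac{\partial s^\mu}{\partial x^\alpha}+N^\mu_\alpha(x,s(x))$ and $D_\xi s^\mu=\xi^\alpha D_\alpha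 s^\mu$. *)

(* Defs.v *)
From Stdlib Require Import Reals Lra List ClassicalEpsilon.
From Stdlib Require Fin.
Open Scope R_scope.

Definition V (m : nat) := Fin.t m -> R.

Definition vadd {m} (p q : V m) : V m := fun i => p i + q i.
Definition vsub {m} (p q : V m) : V m := fun i => p i - q i.
Definition vzero {m} : V m := fun _ => 0.
Definition kdelta {m} (i j : Fin.t m) : R := if Fin.eq_dec i j then 1 else 0.
Definition ebasis {m} (i : Fin.t m) : V m := fun j => kdelta i j.
Definition vscale {m} (t : R) (p : V m) : V m := fun i => t * p i.

Fixpoint fsum (m : nat) : (Fin.t m -> R) -> R :=
  match m with
  | O => fun _ => 0
  | S k => fun f => f Fin.F1 + fsum k (fun i => f (Fin.FS i))
  end.
Arguments fsum {m} f.

Definition vnorm {m} (p : V m) : R := fsum (fun i => Rabs (p i)).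
Definition is_open {m} (D : V m -> Prop) : Prop :=
  forall p, D p -> exists r, 0 < r /\ forall q, vnorm (vsub q p) < r -> D q.
Definition continuous_at_pt {m} (f : V m -> R) (p : V m) : Prop :=
  forall eps, 0 < eps -> exists del, 0 < del /\
    forall q, vnorm (vsub q p) < del -> Rabs (f q - f p) < eps.

Definition is_partial {m} (i : Fin.t m) (f : V m -> R) (p : V m) (l : R) : Prop :=
  derivable_pt_lim (fun t => f (vadd p (vscale t (ebasis i)))) 0 l.

(** The partial derivative as a total operator (its value when it exists). *)
Definition pd {m} (i : Fin.t m) (f : V m -> R) (p : V m) : R :=
  epsilon (inhabits 0) (fun l => is_partial i f p l).

Definition iter_pd {m} (l : list (Fin.t m)) (f : V m -> R) : V m -> R :=
  fold_right (fun i h => pd i h) f l.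

Definition smooth_on {m} (D : V m -> Prop) (f : V m -> R) : Prop :=
  forall (l : list (Fin.t m)) p, D p ->
    (forall i, is_partial i (iter_pd l f) p (iter_pd (i :: l) f p)) /\
    continuous_at_pt (iter_pd l f) p.

Definition Mat n := Fin.t n -> Fin.t n -> R.
Definition is_inverse {n} (A B : Mat n) : Prop :=
  (forall a b, fsum (fun s => A a s * B s b) = kdelta a b) /\
  (forall a b, fsum (fun s => B a s * A s b) = kdelta a b).
Definition nondegenerate {n} (A : Mat n) : Prop := exists B, is_inverse A B.
Definition minv {n} (A : Mat n) : Mat n :=
  epsilon (inhabits (fun _ _ => 0)) (fun B => is_inverse A B).

(** Coordinates on TM over a chart: z = (x, y) in R^(n+n). *)
Definition xpart {n} (z : V (n + n)) : V n := fun i => z (Fin.L n i).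
Definition ypart {n} (z : V (n + n)) : V n := fun i => z (Fin.R n i).

Section Finsler.
Variable n : nat.
Variable L : V n -> V n -> R.

Definition pdx (i : Fin.t n) (f : V n -> V n -> R) (x y : V n) : R :=
  pd i (fun x' => f x' y) x.
Definition pdy (i : Fin.t n) (f : V n -> V n -> R) (x y : V n) : R :=
  pd i (fun y' => f x y') y.

Definition gmet (x y : V n) : Mat n :=
  fun mu nu => pdy mu (fun x' y' => pdy nu (fun x'' y'' => L x'' y'') x' y') x y.
Definition ginv (x y : V n) : Mat n := minv (gmet x y).

Definition cartan (a b c : Fin.t n) (x y : V n) : R :=
  / 2 * pdy a (fun x' y' => gmet x' y' b c) x y.
Definition cartan_up (a b c : Fin.t n) (x y : V n) : R :=
  fsum (fun d => ginv x y a d * cartan d b c x y).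

Definition spray (a : Fin.t n) (x y : V n) : R :=
  / 2 * fsum (fun d => ginv x y a d *
     (fsum (fun c => pdx c (fun x' y' => pdy d (fun x'' y'' => L x'' y'') x' y') x y * y c)
      - pdx d (fun x' y' => L x' y') x y)).

Definition nlc (a mu : Fin.t n) (x y : V n) : R := pdy mu (spray a) x y.

Definition deltax (mu : Fin.t n) (f : V n -> V n -> R) (x y : V n) : R :=
  pdx mu f x y - fsum (fun nu => nlc nu mu x y * pdy nu f x y).

Definition chern_rund (a b c : Fin.t n) (x y : V n) : R :=
  / 2 * fsum (fun s => ginv x y a s *
    (deltax b (fun x' y' => gmet x' y' s c) x y
     + deltax c (fun x' y' => gmet x' y' s b) x y
     - deltax s (fun x' y' => gmet x' y' b c) x y)).

Definition Dsec (s : V n -> V n) (a mu : Fin.t n) (x : V n) : R :=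
  pd a (fun x' => s x' mu) x + nlc mu a x (s x).

End Finsler.

Definition levi_civita {n} (h : V n -> Mat n) (a b c : Fin.t n) (x : V n) : R :=
  / 2 * fsum (fun s => minv (h x) a s *
    (pd b (fun x' => h x' s c) x + pd c (fun x' => h x' s b) x
     - pd s (fun x' => h x' b c) x)).

Definition pullback_metric {n} (L : V n -> V n -> R) (s : V n -> V n) (x : V n) : Mat n :=
  gmet n L x (s x).

(* Main.v *)
Require Import Defs.
From Stdlib Require Import Reals Lra FunctionalExtensionality ClassicalEpsilon Classical List.
Import ListNotations.
From Stdlib Require Fin.
Open Scope R_scope.

Lemma kdelta_eq {m} (i : Fin.t m) : kdelta i i = 1.
Proof. unfold kdelta; destruct (Fin.eq_dec i i); congruence. Qed.
Lemma kdelta_neq {m} (i j : Fin.t m) : i <> j -> kdelta i j = 0.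
Proof. unfold kdelta; destruct (Fin.eq_dec i j); congruence. Qed.
Lemma kdelta_sym {m} (i j : Fin.t m) : kdelta i j = kdelta j i.
Proof. unfold kdelta; destruct (Fin.eq_dec i j), (Fin.eq_dec j i); congruence. Qed.

Lemma fsum_ext {m} (f g : Fin.t m -> R) : (forall i, f i = g i) -> fsum f = fsum g.
Proof. revert f g; induction m; intros f g H; simpl; auto. rewrite H, (IHm _ (fun i => g (Fin.FS i))); auto. Qed.
Lemma fsum_plus {m} (f g : Fin.t m -> R) : fsum (fun i => f i + g i) = fsum f + fsum g.
Proof. revert f g; induction m; intros f g; simpl. lra. rewrite IHm. lra. Qed.
Lemma fsum_minus {m} (f g : Fin.t m -> R) : fsum (fun i => f i - g i) = fsum f - fsum g.
Proof. revert f g; induction m; intros f g; simpl. lra. rewrite IHm. lra. Qed.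
Lemma fsum_scal {m} (c : R) (f : Fin.t m -> R) : fsum (fun i => c * f i) = c * fsum f.
Proof. revert f; induction m; intros f; simpl. lra. rewrite IHm. lra. Qed.
Lemma fsum_zero {m} : fsum (fun _ : Fin.t m => 0) = 0.
Proof. induction m; simpl; auto. rewrite IHm; lra. Qed.
Lemma fsum_swap {m k} (f : Fin.t m -> Fin.t k -> R) :
  fsum (fun i => fsum (fun j => f i j)) = fsum (fun j => fsum (fun i => f i j)).
Proof. revert f; induction m; intros f; simpl. now rewrite fsum_zero.
  rewrite IHm. rewrite <- fsum_plus. reflexivity. Qed.
Lemma fsum_le {m} (f g : Fin.t m -> R) : (forall i, f i <= g i) -> fsum f <= fsum g.
Proof. revert f g; induction m; intros f g H; simpl. lra. specialize (IHm (fun i => f (Fin.FS i)) (fun i => g (Fin.FS i))). assert (fsum (fun i => f (Fin.FS i)) <= fsum (fun i => g (Fin.FS i))) by (apply IHm; intros; apply H). specialize (H Fin.F1). lra. Qed.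
Lemma fsum_nonneg {m} (f : Fin.t m -> R) : (forall i, 0 <= f i) -> 0 <= fsum f.
Proof. intros H. rewrite <- (@fsum_zero m). apply fsum_le. auto. Qed.
Lemma fsum_single_le {m} (f : Fin.t m -> R) i : (forall i, 0 <= f i) -> f i <= fsum f.
Proof. revert f i; induction m; intros f i H. inversion i.
  apply (Fin.caseS' i); simpl.
  - assert (0 <= fsum (fun i => f (Fin.FS i))) by (apply fsum_nonneg; auto). lra.
  - intros p. assert (f (Fin.FS p) <= fsum (fun i => f (Fin.FS i))) by (apply (IHm (fun i => f (Fin.FS i))); auto). specialize (H Fin.F1). lra. Qed.
Lemma fsum_kdelta {m} (b : Fin.t m) (f : Fin.t m -> R) : fsum (fun i => kdelta b i * f i) = f b.
Proof. revert b f; induction m; intros b f. inversion b.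
  apply (Fin.caseS' b); simpl.
  - rewrite kdelta_eq. rewrite (fsum_ext _ (fun _ => 0)). rewrite fsum_zero; lra.
    intros i; rewrite kdelta_neq by discriminate. lra.
  - intros p. rewrite kdelta_neq by discriminate.
    rewrite (fsum_ext _ (fun i => kdelta p i * f (Fin.FS i))). rewrite IHm. lra.
    intros i. unfold kdelta. destruct (Fin.eq_dec (Fin.FS p) (Fin.FS i)), (Fin.eq_dec p i); subst; try congruence; apply Fin.FS_inj in e; congruence.
Qed.
Lemma fsum_LR {n k} (f : Fin.t (n + k) -> R) :
  fsum f = fsum (fun i => f (Fin.L k i)) + fsum (fun j => f (Fin.R n j)).
Proof. revert f; induction n; intros f; simpl. rewrite Rplus_0_l; reflexivity. rewrite (IHn (fun i => f (Fin.FS i))). cbv beta. rewrite Rplus_assoc; reflexivity. Qed.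

Lemma veq {m} (p q : V m) : (forall i, p i = q i) -> p = q.
Proof. intros; apply functional_extensionality; auto. Qed.

Lemma pd_unique {m} i (f : V m -> R) p l : is_partial i f p l -> pd i f p = l.
Proof. intros H. unfold pd.
  pose proof (epsilon_spec (inhabits 0) (fun l => is_partial i f p l) (ex_intro _ l H)) as H2.
  eapply uniqueness_limite; eauto. Qed.

Lemma pd_transfer {m k} i j (f : V m -> R) (g : V k -> R) p q :
  (forall t, f (vadd p (vscale t (ebasis i))) = g (vadd q (vscale t (ebasis j)))) ->
  pd i f p = pd j g q.
Proof. intros H. unfold pd, is_partial.
  assert (E : (fun t => f (vadd p (vscale t (ebasis i)))) = (fun t => g (vadd q (vscale t (ebasis j))))).
  { apply functional_extensionality; auto. }
  rewrite E. reflexivity. Qed.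

Lemma is_partial_transfer {m k} i j (f : V m -> R) (g : V k -> R) p q l :
  (forall t, f (vadd p (vscale t (ebasis i))) = g (vadd q (vscale t (ebasis j)))) ->
  is_partial i f p l -> is_partial j g q l.
Proof. intros H. unfold is_partial.
  assert (E : (fun t => f (vadd p (vscale t (ebasis i)))) = (fun t => g (vadd q (vscale t (ebasis j))))).
  { apply functional_extensionality; auto. }
  rewrite E. auto. Qed.

Lemma vnorm_scale_ebasis {m} (t : R) (i : Fin.t m) : vnorm (vscale t (ebasis i)) = Rabs t.
Proof. unfold vnorm, vscale, ebasis.
  rewrite (fsum_ext _ (fun k => kdelta i k * Rabs t)). apply (fsum_kdelta i (fun _ => Rabs t)).
  intros k. unfold kdelta. destruct (Fin.eq_dec i k). rewrite Rmult_1_r; lra.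
  rewrite Rmult_0_r, Rabs_R0; lra. Qed.

Lemma vnorm_triangle {m} (p q : V m) : vnorm (vadd p q) <= vnorm p + vnorm q.
Proof. unfold vnorm, vadd. rewrite <- fsum_plus. apply fsum_le. intros; apply Rabs_triang. Qed.

Lemma vnorm_nonneg {m} (p : V m) : 0 <= vnorm p.
Proof. apply fsum_nonneg. intros; apply Rabs_pos. Qed.

Lemma coord_le_vnorm {m} (p : V m) i : Rabs (p i) <= vnorm p.
Proof. unfold vnorm. apply (fsum_single_le (fun i => Rabs (p i))). intros; apply Rabs_pos. Qed.

Lemma kdelta_LR {n} (i j : Fin.t n) : kdelta (Fin.L n i) (Fin.R n j) = 0.
Proof. apply kdelta_neq. apply Fin.L_R_neq. Qed.
Lemma kdelta_RL {n} (i j : Fin.t n) : kdelta (Fin.R n i) (Fin.L n j) = 0.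
Proof. apply kdelta_neq. intros H. symmetry in H. eapply Fin.L_R_neq; eauto. Qed.
Lemma kdelta_LL {n} (i j : Fin.t n) : kdelta (Fin.L n i) (Fin.L n j) = kdelta i j.
Proof. unfold kdelta. destruct (Fin.eq_dec (Fin.L n i) (Fin.L n j)), (Fin.eq_dec i j); subst; try congruence.
  apply Fin.L_inj in e; congruence. Qed.
Lemma kdelta_RR {n} (i j : Fin.t n) : kdelta (Fin.R n i) (Fin.R n j) = kdelta i j.
Proof. unfold kdelta. destruct (Fin.eq_dec (Fin.R n i) (Fin.R n j)), (Fin.eq_dec i j); subst; try congruence.
  apply Fin.R_inj in e; congruence. Qed.

Definition join {n} (x y : V n) : V (n + n) :=
  fun k => Fin.case_L_R' (fun _ => R) k (fun q => x q) (fun q => y q).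
Lemma join_L {n} (x y : V n) i : join x y (Fin.L n i) = x i.
Proof. unfold join. apply (Fin.case_L_R'_L (fun _ => R)). Qed.
Lemma join_R {n} (x y : V n) i : join x y (Fin.R n i) = y i.
Proof. unfold join. apply (Fin.case_L_R'_R (fun _ => R)). Qed.
Lemma xpart_join {n} (x y : V n) : xpart (join x y) = x.
Proof. apply veq; intros; unfold xpart; apply join_L. Qed.
Lemma ypart_join {n} (x y : V n) : ypart (join x y) = y.
Proof. apply veq; intros; unfold ypart; apply join_R. Qed.
Lemma join_ext {n} (z w : V (n + n)) :
  (forall i, z (Fin.L n i) = w (Fin.L n i)) -> (forall i, z (Fin.R n i) = w (Fin.R n i)) -> z = w.
Proof. intros H1 H2. apply veq. intros k. apply (Fin.case_L_R' (fun k => z k = w k) k); auto. Qed.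

Lemma join_shiftR {n} (x y : V n) mu t :
  vadd (join x y) (vscale t (ebasis (Fin.R n mu))) = join x (vadd y (vscale t (ebasis mu))).
Proof. apply join_ext; intros i; unfold vadd, vscale, ebasis; rewrite ?join_L, ?join_R.
  rewrite kdelta_RL; lra. rewrite kdelta_RR; lra. Qed.
Lemma join_shiftL {n} (x y : V n) mu t :
  vadd (join x y) (vscale t (ebasis (Fin.L n mu))) = join (vadd x (vscale t (ebasis mu))) y.
Proof. apply join_ext; intros i; unfold vadd, vscale, ebasis; rewrite ?join_L, ?join_R.
  rewrite kdelta_LL; lra. rewrite kdelta_LR; lra. Qed.

Lemma pd_joinR {n} (Phi : V (n + n) -> R) x y mu :
  pd mu (fun y' => Phi (join x y')) y = pd (Fin.R n mu) Phi (join x y).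
Proof. apply pd_transfer. intros t. rewrite join_shiftR. reflexivity. Qed.
Lemma pd_joinL {n} (Phi : V (n + n) -> R) x y mu :
  pd mu (fun x' => Phi (join x' y)) x = pd (Fin.L n mu) Phi (join x y).
Proof. apply pd_transfer. intros t. rewrite join_shiftL. reflexivity. Qed.

Lemma deriv_cont (f : R -> R) x l : derivable_pt_lim f x l ->
  forall eps, 0 < eps -> exists del, 0 < del /\ forall y, Rabs (y - x) < del -> Rabs (f y - f x) < eps.
Proof. intros H eps He.
  assert (Hc : continuity_pt f x) by (apply derivable_continuous_pt; exists l; exact H).
  destruct (Hc eps He) as [alp [Ha Hb]]. exists alp; split; auto.
  intros y Hy. destruct (Req_dec y x) as [->|Hne]. rewrite Rminus_eq_0, Rabs_R0; auto.
  apply (Hb y). split. unfold D_x, no_cond; auto. exact Hy. Qed.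

Lemma deriv_shift (f : R -> R) c l : derivable_pt_lim (fun t => f (c + t)) 0 l -> derivable_pt_lim f c l.
Proof. intros H eps He. destruct (H eps He) as [d Hd]. exists d. intros h H1 H2.
  specialize (Hd h H1 H2). rewrite Rplus_0_l, Rplus_0_r in Hd. exact Hd. Qed.

Lemma deriv_unshift (f : R -> R) c l : derivable_pt_lim f c l -> derivable_pt_lim (fun t => f (c + t)) 0 l.
Proof. intros H eps He. destruct (H eps He) as [d Hd]. exists d. intros h H1 H2.
  specialize (Hd h H1 H2). rewrite Rplus_0_l, Rplus_0_r. exact Hd. Qed.

Definition vtail {m} (p : V (S m)) : V m := fun j => p (Fin.FS j).
Definition vcons {m} (a : R) (w : V m) : V (S m) := fun i => Fin.caseS' i (fun _ => R) a (fun j => w j).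
Lemma vcons_F1 {m} a (w : V m) : vcons a w Fin.F1 = a. Proof. reflexivity. Qed.
Lemma vcons_FS {m} a (w : V m) j : vcons a w (Fin.FS j) = w j. Proof. reflexivity. Qed.
Lemma vcons_eta {m} (p : V (S m)) : p = vcons (p Fin.F1) (vtail p).
Proof. apply veq. intros i. apply (Fin.caseS' i); reflexivity. Qed.
Lemma vnorm_S {m} (p : V (S m)) : vnorm p = Rabs (p Fin.F1) + vnorm (vtail p).
Proof. reflexivity. Qed.
Lemma vsub_cons {m} a b (w u : V m) : vsub (vcons a w) (vcons b u) = vcons (a - b) (vsub w u).
Proof. apply veq. intros i. apply (Fin.caseS' i); reflexivity. Qed.
Lemma vnorm_cons {m} a (w : V m) : vnorm (vcons a w) = Rabs a + vnorm w.
Proof. reflexivity. Qed.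
Lemma vcons_shiftF1 {m} a (w : V m) t : vadd (vcons a w) (vscale t (ebasis Fin.F1)) = vcons (a + t) w.
Proof. apply veq. intros i. apply (Fin.caseS' i); unfold vadd, vscale, ebasis; simpl.
  rewrite kdelta_eq; lra. intros j; rewrite kdelta_neq by discriminate. lra. Qed.
Lemma vcons_shiftFS {m} a (w : V m) j t :
  vadd (vcons a w) (vscale t (ebasis (Fin.FS j))) = vcons a (vadd w (vscale t (ebasis j))).
Proof. apply veq. intros i. apply (Fin.caseS' i); unfold vadd, vscale, ebasis; simpl.
  rewrite kdelta_neq by discriminate. lra.
  intros k. unfold kdelta. destruct (Fin.eq_dec (Fin.FS j) (Fin.FS k)), (Fin.eq_dec j k); subst; try congruence; apply Fin.FS_inj in e; congruence. Qed.

Lemma curve_cont {m} (g : R -> V m) (dg : V m) :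
  (forall k, derivable_pt_lim (fun t => g t k) 0 (dg k)) ->
  forall eta, 0 < eta -> exists del, 0 < del /\ forall t, Rabs t < del -> vnorm (vsub (g t) (g 0)) < eta.
Proof. revert g dg. induction m; intros g dg Hd eta He.
  - exists 1. split. lra. intros. unfold vnorm; simpl. lra.
  - destruct (deriv_cont _ _ _ (Hd Fin.F1) (eta/2)) as [d1 [Hd1 H1]]. lra.
    destruct (IHm (fun t => vtail (g t)) (vtail dg)) with (eta := eta/2) as [d2 [Hd2 H2]].
    intros k. apply (Hd (Fin.FS k)). lra.
    exists (Rmin d1 d2). split. apply Rmin_pos; auto.
    intros t Ht. rewrite vnorm_S. specialize (H1 t). specialize (H2 t).
    assert (Rabs (t - 0) < d1) by (rewrite Rminus_0_r; eapply Rlt_le_trans; [exact Ht| apply Rmin_l]).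
    assert (Rabs t < d2) by (eapply Rlt_le_trans; [exact Ht| apply Rmin_r]).
    specialize (H1 H). specialize (H2 H0). change (Rabs (g t Fin.F1 - g 0 Fin.F1) + vnorm (vsub (vtail (g t)) (vtail (g 0))) < eta). lra.
Qed.

Lemma partial_F1_deriv {m} (G : V (S m) -> R) (w : V m) c l :
  is_partial Fin.F1 G (vcons c w) l -> derivable_pt_lim (fun u => G (vcons u w)) c l.
Proof. unfold is_partial. intros H. apply deriv_shift.
  assert (E : (fun t => G (vadd (vcons c w) (vscale t (ebasis Fin.F1)))) = (fun t => G (vcons (c + t) w))).
  { apply functional_extensionality; intros t. rewrite vcons_shiftF1. reflexivity. }
  rewrite E in H. exact H. Qed.

Lemma mvt_step {m} (G : V (S m) -> R) (w : V m) a u :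
  (forall c, Rabs (c - a) <= Rabs (u - a) -> is_partial Fin.F1 G (vcons c w) (pd Fin.F1 G (vcons c w))) ->
  exists xi, Rabs (xi - a) <= Rabs (u - a) /\
    G (vcons u w) - G (vcons a w) = pd Fin.F1 G (vcons xi w) * (u - a).
Proof. intros H. destruct (Rtotal_order u a) as [Hlt|[Heq|Hgt]].
  - destruct (MVT_cor2 (fun u => G (vcons u w)) (fun c => pd Fin.F1 G (vcons c w)) u a Hlt) as [c [Hc1 Hc2]].
    { intros c Hc. apply partial_F1_deriv. apply H. rewrite !Rabs_left1 by lra. lra. }
    exists c. split. rewrite !Rabs_left1 by lra. lra. simpl in Hc1. lra.
  - subst. exists a. split. lra. ring.
  - destruct (MVT_cor2 (fun u => G (vcons u w)) (fun c => pd Fin.F1 G (vcons c w)) a u Hgt) as [c [Hc1 Hc2]].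
    { intros c Hc. apply partial_F1_deriv. apply H. rewrite !Rabs_right by lra. lra. }
    exists c. split. rewrite !Rabs_right by lra. lra. simpl in Hc1. lra.
Qed.

Lemma final_ineq P D Q e e1 e3 eps :
  0 < eps -> e1 = eps / (2 * (Rabs D + 1)) -> e3 = Rmin 1 (eps / (2 * (Rabs P + 1))) ->
  Rabs e < e1 -> Rabs (Q - D) < e3 ->
  Rabs ((P + e) * Q - P * D) < eps.
Proof. intros He He1 He3 H1 H2.
  assert (HQ : Rabs Q < Rabs D + 1).
  { assert (e3 <= 1) by (rewrite He3; apply Rmin_l).
    pose proof (Rabs_triang (Q - D) D) as T. replace (Q - D + D) with Q in T by ring. lra. }
  assert (He3' : e3 <= eps / (2 * (Rabs P + 1))) by (rewrite He3; apply Rmin_r).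
  replace ((P + e) * Q - P * D) with (P * (Q - D) + e * Q) by ring.
  eapply Rle_lt_trans. apply Rabs_triang. rewrite !Rabs_mult.
  assert (A1 : Rabs P * Rabs (Q - D) <= eps / 2).
  { assert (0 <= Rabs P) by apply Rabs_pos. assert (0 <= Rabs (Q - D)) by apply Rabs_pos.
    apply Rle_trans with (Rabs P * (eps / (2 * (Rabs P + 1)))).
    apply Rmult_le_compat_l; lra.
    unfold Rdiv. rewrite Rinv_mult.
    apply Rle_trans with ((Rabs P * / (Rabs P + 1)) * (eps * / 2)). right; ring.
    apply Rle_trans with (1 * (eps * / 2)). apply Rmult_le_compat_r. lra.
    apply Rmult_le_reg_r with (Rabs P + 1). lra. rewrite Rmult_assoc, Rinv_l by lra. lra. lra. }
  assert (A2 : Rabs e * Rabs Q < eps / 2).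
  { assert (0 <= Rabs e) by apply Rabs_pos. assert (0 <= Rabs Q) by apply Rabs_pos.
    apply Rle_lt_trans with (Rabs e * (Rabs D + 1)). apply Rmult_le_compat_l; lra.
    apply Rlt_le_trans with (e1 * (Rabs D + 1)). apply Rmult_lt_compat_r. pose proof (Rabs_pos D); lra. auto.
    rewrite He1. unfold Rdiv. rewrite Rinv_mult. right. field. pose proof (Rabs_pos D); lra. }
  lra. Qed.

Lemma first_coord_deriv {m} (G : V (S m) -> R) (g : R -> V (S m)) (dg : V (S m)) r :
  0 < r ->
  (forall z, vnorm (vsub z (g 0)) < r -> is_partial Fin.F1 G z (pd Fin.F1 G z)) ->
  continuous_at_pt (pd Fin.F1 G) (g 0) ->
  (forall k, derivable_pt_lim (fun t => g t k) 0 (dg k)) ->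
  derivable_pt_lim (fun t => G (vcons (g t Fin.F1) (vtail (g t))) - G (vcons (g 0 Fin.F1) (vtail (g t))))
    0 (pd Fin.F1 G (g 0) * dg Fin.F1).
Proof.
  intros Hr Hp Hc Hd eps Heps.
  pose (P := pd Fin.F1 G (g 0)). pose (D := dg Fin.F1).
  pose (e1 := eps / (2 * (Rabs D + 1))).
  assert (He1: 0 < e1) by (unfold e1; apply Rdiv_lt_0_compat; [lra| pose proof (Rabs_pos D); lra]).
  pose (e3 := Rmin 1 (eps / (2 * (Rabs P + 1)))).
  assert (He3 : 0 < e3) by (apply Rmin_pos; [lra| apply Rdiv_lt_0_compat; [lra|pose proof (Rabs_pos P); lra]]).
  destruct (Hc e1 He1) as [d1 [Hd1 H1]].
  destruct (curve_cont g dg Hd (Rmin r d1)) as [d2 [Hd2 H2]]. apply Rmin_pos; auto.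
  destruct (Hd Fin.F1 e3 He3) as [d3 H3].
  assert (Hdd: 0 < Rmin d2 d3) by (apply Rmin_pos; auto; apply cond_pos).
  exists (mkposreal _ Hdd). intros h Hh0 Hh. simpl in Hh.
  rewrite Rplus_0_l.
  replace (G (vcons (g 0 Fin.F1) (vtail (g 0))) - G (vcons (g 0 Fin.F1) (vtail (g 0)))) with 0 by ring.
  rewrite Rminus_0_r.
  specialize (H2 h (Rlt_le_trans _ _ _ Hh (Rmin_l _ _))).
  specialize (H3 h Hh0 (Rlt_le_trans _ _ _ Hh (Rmin_r _ _))). rewrite Rplus_0_l in H3.
  assert (Hq : Rabs (g h Fin.F1 - g 0 Fin.F1) + vnorm (vsub (vtail (g h)) (vtail (g 0))) < Rmin r d1).
  { exact H2. }
  pose proof (Rmin_l r d1). pose proof (Rmin_r r d1).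
  destruct (mvt_step G (vtail (g h)) (g 0 Fin.F1) (g h Fin.F1)) as [xi [Hxi Heq]].
  { intros c Hc'. apply Hp. rewrite (vcons_eta (g 0)). rewrite vsub_cons, vnorm_cons. lra. }
  assert (Hx : Rabs (pd Fin.F1 G (vcons xi (vtail (g h))) - P) < e1).
  { apply H1. rewrite (vcons_eta (g 0)). rewrite vsub_cons, vnorm_cons. lra. }
  rewrite Heq.
  replace (pd Fin.F1 G (vcons xi (vtail (g h))) * (g h Fin.F1 - g 0 Fin.F1) / h)
    with ((P + (pd Fin.F1 G (vcons xi (vtail (g h))) - P)) * ((g h Fin.F1 - g 0 Fin.F1) / h))
    by (field; auto).
  apply (final_ineq P D _ _ e1 e3 eps); auto.
Qed.

Lemma vnorm_vsub_cons {m} a (w : V m) (p : V (S m)) :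
  vnorm (vsub (vcons a w) p) = Rabs (a - p Fin.F1) + vnorm (vsub w (vtail p)).
Proof. reflexivity. Qed.

Lemma chain {m} : forall (G : V m -> R) (g : R -> V m) (dg : V m) r, 0 < r ->
  (forall z, vnorm (vsub z (g 0)) < r -> forall k, is_partial k G z (pd k G z)) ->
  (forall k, continuous_at_pt (pd k G) (g 0)) ->
  (forall k, derivable_pt_lim (fun t => g t k) 0 (dg k)) ->
  derivable_pt_lim (fun t => G (g t)) 0 (fsum (fun k => pd k G (g 0) * dg k)).
Proof. induction m; intros G g dg r Hr Hp Hc Hd.
  - simpl. assert (E: (fun t => G (g t)) = fct_cte (G (g 0))).
    { apply functional_extensionality; intros t. unfold fct_cte. f_equal. apply veq. intros i; inversion i. }
    rewrite E. apply derivable_pt_lim_const.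
  - pose (G' := fun w : V m => G (vcons (g 0 Fin.F1) w)).
    assert (Hpd' : forall j w, pd j G' w = pd (Fin.FS j) G (vcons (g 0 Fin.F1) w)).
    { intros. apply pd_transfer. intros t. unfold G'. rewrite vcons_shiftFS. reflexivity. }
    assert (IH := IHm G' (fun t => vtail (g t)) (vtail dg) r Hr).
    assert (IH' : derivable_pt_lim (fun t => G' (vtail (g t))) 0 (fsum (fun j => pd j G' (vtail (g 0)) * vtail dg j))).
    { apply IH.
      - intros z Hz j. rewrite Hpd'.
        apply (is_partial_transfer (Fin.FS j) j G G' (vcons (g 0 Fin.F1) z) z).
        intros t; unfold G'; rewrite vcons_shiftFS; reflexivity.
        apply Hp. rewrite vnorm_vsub_cons. rewrite Rminus_diag, Rabs_R0. lra.
      - intros j eps He. destruct (Hc (Fin.FS j) eps He) as [d [Hd0 Hd1]]. exists d. split; auto.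
        intros q Hq. rewrite !Hpd'. rewrite <- vcons_eta. apply Hd1.
        rewrite vnorm_vsub_cons. rewrite Rminus_diag, Rabs_R0. lra.
      - intros j. apply (Hd (Fin.FS j)). }
    pose proof (first_coord_deriv G g dg r Hr (fun z Hz => Hp z Hz Fin.F1) (Hc Fin.F1) Hd) as FC.
    pose proof (derivable_pt_lim_plus _ _ _ _ _ FC IH') as Hs.
    assert (E : (fun t => G (g t)) = plus_fct (fun t => G (vcons (g t Fin.F1) (vtail (g t))) - G (vcons (g 0 Fin.F1) (vtail (g t)))) (fun t => G' (vtail (g t)))).
    { apply functional_extensionality; intros t. unfold plus_fct, G'. rewrite <- vcons_eta. ring. }
    rewrite E.
    replace (fsum (fun k => pd k G (g 0) * dg k)) with (pd Fin.F1 G (g 0) * dg Fin.F1 + fsum (fun j => pd j G' (vtail (g 0)) * vtail dg j)).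
    exact Hs.
    simpl. f_equal. apply fsum_ext; intros j. rewrite Hpd', <- vcons_eta. reflexivity.
Qed.

Definition p2 {m} (z0 : V m) i j u v : V m := vadd (vadd z0 (vscale u (ebasis i))) (vscale v (ebasis j)).

Lemma p2_norm {m} (z0 : V m) i j u v : vnorm (vsub (p2 z0 i j u v) z0) <= Rabs u + Rabs v.
Proof. replace (vsub (p2 z0 i j u v) z0) with (vadd (vscale u (ebasis i)) (vscale v (ebasis j))).
  rewrite <- vnorm_scale_ebasis with (i := i), <- vnorm_scale_ebasis with (i := j). apply vnorm_triangle.
  apply veq; intros k; unfold p2, vadd, vsub; ring. Qed.
Lemma p2_00 {m} (z0 : V m) i j : p2 z0 i j 0 0 = z0.
Proof. apply veq; intros k; unfold p2, vadd, vscale; ring. Qed.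

Lemma p2_di {m} (Phi : V m -> R) z0 i j u v l :
  is_partial i Phi (p2 z0 i j u v) l -> derivable_pt_lim (fun z => Phi (p2 z0 i j z v)) u l.
Proof. intros H. apply deriv_shift. unfold is_partial in H.
  assert (E : (fun t => Phi (vadd (p2 z0 i j u v) (vscale t (ebasis i)))) = (fun t => Phi (p2 z0 i j (u + t) v))).
  { apply functional_extensionality; intros t. f_equal. apply veq; intros k; unfold p2, vadd, vscale; ring. }
  rewrite E in H; exact H. Qed.
Lemma p2_dj {m} (Phi : V m -> R) z0 i j u v l :
  is_partial j Phi (p2 z0 i j u v) l -> derivable_pt_lim (fun z => Phi (p2 z0 i j u z)) v l.
Proof. intros H. apply deriv_shift. unfold is_partial in H.
  assert (E : (fun t => Phi (vadd (p2 z0 i j u v) (vscale t (ebasis j)))) = (fun t => Phi (p2 z0 i j u (v + t)))).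
  { apply functional_extensionality; intros t. f_equal. apply veq; intros k; unfold p2, vadd, vscale; ring. }
  rewrite E in H; exact H. Qed.

Module Sch.
From Coquelicot Require Import Coquelicot.

Lemma schwarz_V {m} (H : V m -> R) (z0 : V m) r i j : 0 < r ->
  (forall z, vnorm (vsub z z0) < r -> forall k, is_partial k H z (pd k H z) /\
       forall k', is_partial k' (pd k H) z (pd k' (pd k H) z)) ->
  continuous_at_pt (pd i (pd j H)) z0 -> continuous_at_pt (pd j (pd i H)) z0 ->
  pd i (pd j H) z0 = pd j (pd i H) z0.
Proof.
  intros Hr Hp Hc1 Hc2.
  pose (f := fun u v => H (p2 z0 i j u v)).
  assert (Hr4 : 0 < r / 4) by lra.
  assert (Hin : forall u v, Rabs u < r / 2 -> Rabs v < r / 2 -> vnorm (vsub (p2 z0 i j u v) z0) < r).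
  { intros u v Hu Hv. pose proof (p2_norm z0 i j u v). lra. }
  assert (D1 : forall u v, Rabs u < r / 2 -> Rabs v < r / 2 -> Derive (fun t => f u t) v = pd j H (p2 z0 i j u v)).
  { intros u v Hu Hv. apply is_derive_unique. apply is_derive_Reals. apply p2_dj. apply Hp. auto. }
  assert (D2 : forall u v, Rabs u < r / 2 -> Rabs v < r / 2 -> Derive (fun t => f t v) u = pd i H (p2 z0 i j u v)).
  { intros u v Hu Hv. apply is_derive_unique. apply is_derive_Reals. apply p2_di. apply Hp. auto. }
  assert (E1 : forall u v, Rabs u < r / 4 -> Rabs v < r / 4 ->
     is_derive (fun z => Derive (fun t => f z t) v) u (pd i (pd j H) (p2 z0 i j u v))).
  { intros u v Hu Hv. apply is_derive_ext_loc with (f := fun z => pd j H (p2 z0 i j z v)).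
    exists (mkposreal _ Hr4). intros y Hy. change R in y. change (Rabs (y - u) < r / 4) in Hy.
    symmetry. apply D1. pose proof (Rabs_triang (y - u) u). replace (y - u + u) with y in H0 by ring. lra. lra.
    apply is_derive_Reals. apply p2_di. apply Hp. apply Hin; lra. }
  assert (E2 : forall u v, Rabs u < r / 4 -> Rabs v < r / 4 ->
     is_derive (fun z => Derive (fun t => f t z) u) v (pd j (pd i H) (p2 z0 i j u v))).
  { intros u v Hu Hv. apply is_derive_ext_loc with (f := fun z => pd i H (p2 z0 i j u z)).
    exists (mkposreal _ Hr4). intros y Hy. change R in y. change (Rabs (y - v) < r / 4) in Hy.
    symmetry. apply D2. lra. pose proof (Rabs_triang (y - v) v). replace (y - v + v) with y in H0 by ring. lra.
    apply is_derive_Reals. apply p2_dj. apply Hp. apply Hin; lra. }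
  pose proof (Schwarz f 0 0) as S.
  assert (S1 : Derive (fun z => Derive (fun t => f z t) 0) 0 = pd i (pd j H) z0).
  { rewrite <- (p2_00 z0 i j). apply is_derive_unique. apply E1; rewrite Rabs_R0; lra. }
  assert (S2 : Derive (fun z => Derive (fun t => f t z) 0) 0 = pd j (pd i H) z0).
  { rewrite <- (p2_00 z0 i j). apply is_derive_unique. apply E2; rewrite Rabs_R0; lra. }
  rewrite <- S1, <- S2. apply S.
  - exists (mkposreal _ Hr4). intros u v Hu Hv. simpl in Hu, Hv. rewrite Rminus_0_r in Hu, Hv.
    split; [|split; [|split]].
    + exists (pd i H (p2 z0 i j u v)). apply is_derive_Reals. apply p2_di. apply Hp. apply Hin; lra.
    + exists (pd j H (p2 z0 i j u v)). apply is_derive_Reals. apply p2_dj. apply Hp. apply Hin; lra.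
    + eexists. apply E1; auto.
    + eexists. apply E2; auto.
  - intros eps. destruct (Hc1 eps (cond_pos eps)) as [d [Hd Hd']].
    assert (Hm : 0 < Rmin (r / 4) (d / 2)) by (apply Rmin_pos; lra).
    exists (mkposreal _ Hm). intros u v Hu Hv. simpl in Hu, Hv. rewrite Rminus_0_r in Hu, Hv.
    pose proof (Rmin_l (r/4) (d/2)). pose proof (Rmin_r (r/4) (d/2)).
    assert (A1 : Derive (fun z : R => Derive (fun t : R => f z t) v) u = pd i (pd j H) (p2 z0 i j u v))
      by (apply is_derive_unique; apply E1; lra).
    rewrite A1, S1. apply Hd'. pose proof (p2_norm z0 i j u v). lra.
  - intros eps. destruct (Hc2 eps (cond_pos eps)) as [d [Hd Hd']].
    assert (Hm : 0 < Rmin (r / 4) (d / 2)) by (apply Rmin_pos; lra).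
    exists (mkposreal _ Hm). intros u v Hu Hv. simpl in Hu, Hv. rewrite Rminus_0_r in Hu, Hv.
    pose proof (Rmin_l (r/4) (d/2)). pose proof (Rmin_r (r/4) (d/2)).
    assert (A1 : Derive (fun z : R => Derive (fun t : R => f t z) u) v = pd j (pd i H) (p2 z0 i j u v))
      by (apply is_derive_unique; apply E2; lra).
    rewrite A1, S2. apply Hd'. pose proof (p2_norm z0 i j u v). lra.
Qed.
End Sch.

Lemma gmet_eq n (F : V (n + n) -> R) x y mu nu :
  gmet n (fun x y => F (join x y)) x y mu nu = pd (Fin.R n mu) (pd (Fin.R n nu) F) (join x y).
Proof. unfold gmet, pdy. cbv beta.
  assert (E : (fun y' => pd nu (fun y'' => F (join x y'')) y') = (fun y' => pd (Fin.R n nu) F (join x y'))).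
  { apply functional_extensionality; intros y'. apply pd_joinR. }
  rewrite E. apply pd_joinR. Qed.

Lemma gmet_fun n (F : V (n + n) -> R) b c :
  (fun x' y' => gmet n (fun x y => F (join x y)) x' y' b c) = (fun x' y' => pd (Fin.R n b) (pd (Fin.R n c) F) (join x' y')).
Proof. apply functional_extensionality; intros x'. apply functional_extensionality; intros y'. apply gmet_eq. Qed.

Lemma cartan_eq n (F : V (n + n) -> R) a b c x y :
  cartan n (fun x y => F (join x y)) a b c x y = / 2 * pd (Fin.R n a) (pd (Fin.R n b) (pd (Fin.R n c) F)) (join x y).
Proof. unfold cartan. rewrite gmet_fun. unfold pdy. rewrite pd_joinR. reflexivity. Qed.

Lemma deltax_eq n (F : V (n + n) -> R) b s' c x y :
  deltax n (fun x y => F (join x y)) b (fun x' y' => gmet n (fun x y => F (join x y)) x' y' s' c) x y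
  = pd (Fin.L n b) (pd (Fin.R n s') (pd (Fin.R n c) F)) (join x y)
    - fsum (fun nu => nlc n (fun x y => F (join x y)) nu b x y * pd (Fin.R n nu) (pd (Fin.R n s') (pd (Fin.R n c) F)) (join x y)).
Proof. unfold deltax. rewrite gmet_fun. unfold pdx, pdy. rewrite pd_joinL.
  f_equal. apply fsum_ext. intros nu. rewrite pd_joinR. reflexivity. Qed.

Lemma vnorm_split {n} (z : V (n + n)) x y :
  vnorm (vsub z (join x y)) = vnorm (vsub (xpart z) x) + vnorm (vsub (ypart z) y).
Proof. unfold vnorm at 1. rewrite fsum_LR. f_equal; apply fsum_ext; intros i; unfold vsub, xpart, ypart;
  rewrite ?join_L, ?join_R; reflexivity. Qed.

Lemma fsum_scal_r {m} (c : R) (f : Fin.t m -> R) : fsum (fun i => f i * c) = fsum f * c.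
Proof. rewrite Rmult_comm, <- fsum_scal. apply fsum_ext; intros; ring. Qed.

Lemma deriv_affine a k : derivable_pt_lim (fun t => a + t * k) 0 k.
Proof. intros eps He. exists (mkposreal 1 Rlt_0_1). intros h H1 H2.
  replace ((a + (0 + h) * k - (a + 0 * k)) / h - k) with 0 by (field; auto). rewrite Rabs_R0; auto. Qed.

Lemma chain_section n (Phi : V (n + n) -> R) (s : V n -> V n) x b r :
  0 < r ->
  (forall z, vnorm (vsub z (join x (s x))) < r -> forall k, is_partial k Phi z (pd k Phi z)) ->
  (forall k, continuous_at_pt (pd k Phi) (join x (s x))) ->
  (forall mu, is_partial b (fun x' => s x' mu) x (pd b (fun x' => s x' mu) x)) ->
  pd b (fun x' => Phi (join x' (s x'))) x
  = pd (Fin.L n b) Phi (join x (s x)) + fsum (fun mu => pd (Fin.R n mu) Phi (join x (s x)) * pd b (fun x' => s x' mu) x).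
Proof. intros Hr Hp Hc Hs.
  pose (g := fun t => join (vadd x (vscale t (ebasis b))) (s (vadd x (vscale t (ebasis b))))).
  pose (dg := join (ebasis b) (fun mu => pd b (fun x' => s x' mu) x)).
  assert (Hg0 : g 0 = join x (s x)).
  { unfold g. replace (vadd x (vscale 0 (ebasis b))) with x. reflexivity.
    apply veq; intros; unfold vadd, vscale; ring. }
  assert (Hch : derivable_pt_lim (fun t => Phi (g t)) 0 (fsum (fun k => pd k Phi (g 0) * dg k))).
  { apply chain with r; auto; rewrite ?Hg0; auto.
    intros k. apply (Fin.case_L_R' (fun k => derivable_pt_lim (fun t => g t k) 0 (dg k)) k).
    - intros i. unfold g, dg. rewrite join_L.
      assert (E : (fun t => join (vadd x (vscale t (ebasis b))) (s (vadd x (vscale t (ebasis b)))) (Fin.L n i)) = (fun t => x i + t * ebasis b i)).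
      { apply functional_extensionality; intros t. rewrite join_L. reflexivity. }
      rewrite E. apply deriv_affine.
    - intros i. unfold g, dg. rewrite join_R.
      assert (E : (fun t => join (vadd x (vscale t (ebasis b))) (s (vadd x (vscale t (ebasis b)))) (Fin.R n i)) = (fun t => s (vadd x (vscale t (ebasis b))) i)).
      { apply functional_extensionality; intros t. rewrite join_R. reflexivity. }
      rewrite E. apply Hs. }
  rewrite Hg0 in Hch.
  rewrite (pd_unique b _ x _ Hch).
  rewrite fsum_LR. f_equal.
  - unfold dg. rewrite (fsum_ext _ (fun i => kdelta b i * pd (Fin.L n i) Phi (join x (s x)))).
    apply (fsum_kdelta b (fun i => pd (Fin.L n i) Phi (join x (s x)))).
    intros i. rewrite join_L. unfold ebasis. ring.
  - apply fsum_ext. intros i. unfold dg. rewrite join_R. reflexivity.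
Qed.

Lemma alg_inner {m} (g A1 A2 A3 : R) (P1 P2 P3 Q1 Q2 Q3 N1 N2 N3 : Fin.t m -> R) :
  g * (A1 + fsum (fun mu => P1 mu * Q1 mu) + (A2 + fsum (fun mu => P2 mu * Q2 mu)) - (A3 + fsum (fun mu => P3 mu * Q3 mu)))
  - g * (A1 - fsum (fun nu => N1 nu * P1 nu) + (A2 - fsum (fun nu => N2 nu * P2 nu)) - (A3 - fsum (fun nu => N3 nu * P3 nu)))
  = fsum (fun mu => g * (P1 mu * (Q1 mu + N1 mu) + P2 mu * (Q2 mu + N2 mu) - P3 mu * (Q3 mu + N3 mu))).
Proof. rewrite fsum_scal.
  rewrite (fsum_ext (fun mu => P1 mu * (Q1 mu + N1 mu) + P2 mu * (Q2 mu + N2 mu) - P3 mu * (Q3 mu + N3 mu)) (fun mu => (P1 mu * Q1 mu + N1 mu * P1 mu) + (P2 mu * Q2 mu + N2 mu * P2 mu) - (P3 mu * Q3 mu + N3 mu * P3 mu)))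
    by (intros; ring).
  rewrite fsum_minus, !fsum_plus. ring. Qed.

Lemma vnorm_vsub_self {m} (p : V m) : vnorm (vsub p p) = 0.
Proof. unfold vnorm, vsub. rewrite (fsum_ext _ (fun _ => 0)). apply fsum_zero. intros; rewrite Rminus_diag, Rabs_R0; reflexivity. Qed.

Theorem mainTheorem1
  (n : nat) (U : V n -> Prop) (L : V n -> V n -> R) (s : V n -> V n)
  (HU : is_open U)
  (* L is smooth on the chart domain of E = TM \ 0 *)
  (HLsmooth : smooth_on (fun z : V (n + n) => U (xpart z) /\ ypart z <> vzero)
                        (fun z => L (xpart z) (ypart z)))
  (* positive 2-homogeneity in y *)
  (Hhom : forall x y t, U x -> y <> vzero -> 0 < t -> L x (vscale t y) = t ^ 2 * L x y)
  (* non-degeneracy of the Finsler metric *)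
  (Hnd : forall x y, U x -> y <> vzero -> nondegenerate (gmet n L x y))
  (* s is a smooth section of TM \ 0 over the chart *)
  (Hs : forall mu, smooth_on U (fun x => s x mu))
  (Hs0 : forall x, U x -> s x <> vzero) :
  forall x, U x -> forall a b c : Fin.t n,
    levi_civita (pullback_metric L s) a b c x - chern_rund n L a b c x (s x)
    = fsum (fun mu => cartan_up n L a mu c x (s x) * Dsec n L s b mu x
                      + cartan_up n L a mu b x (s x) * Dsec n L s c mu x)
      - fsum (fun mu => fsum (fun d =>
          cartan n L mu b c x (s x) * ginv n L x (s x) a d * Dsec n L s d mu x)).
Proof.
  intros x Ux a b c.
  pose (F := fun z : V (n + n) => L (xpart z) (ypart z)).
  assert (HL : L = fun x y => F (join x y)).
  { apply functional_extensionality; intros x'. apply functional_extensionality; intros y'.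
    unfold F. rewrite xpart_join, ypart_join. reflexivity. }
  pose (z0 := join x (s x)).
  assert (Hball : exists r, 0 < r /\ forall z, vnorm (vsub z z0) < r -> U (xpart z) /\ ypart z <> vzero).
  { destruct (HU x Ux) as [r1 [Hr1 H1]].
    assert (Hk : exists k, s x k <> 0).
    { apply NNPP. intros Hn. apply (Hs0 x Ux). apply veq. intros k. unfold vzero.
      apply NNPP. intros Hk. apply Hn. exists k. exact Hk. }
    destruct Hk as [k Hk].
    exists (Rmin r1 (Rabs (s x k))). split. apply Rmin_pos; auto. apply Rabs_pos_lt; auto.
    intros z Hz. unfold z0 in Hz. rewrite vnorm_split in Hz.
    pose proof (Rmin_l r1 (Rabs (s x k))). pose proof (Rmin_r r1 (Rabs (s x k))).
    pose proof (vnorm_nonneg (vsub (xpart z) x)). pose proof (vnorm_nonneg (vsub (ypart z) (s x))).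
    split. apply H1. lra.
    intros Hy. pose proof (coord_le_vnorm (vsub (ypart z) (s x)) k) as Hc.
    assert (Hy0 : ypart z k = 0) by (rewrite Hy; reflexivity).
    change (Rabs (ypart z k - s x k) <= vnorm (vsub (ypart z) (s x))) in Hc. rewrite Hy0, Rminus_0_l, Rabs_Ropp in Hc. lra. }
  destruct Hball as [r [Hr Hball]].
  assert (SP : forall z, vnorm (vsub z z0) < r -> forall l k, is_partial k (iter_pd l F) z (pd k (iter_pd l F) z)).
  { intros z Hz l k. exact (proj1 (HLsmooth l z (Hball z Hz)) k). }
  assert (SC : forall l, continuous_at_pt (iter_pd l F) z0).
  { intros l. apply (proj2 (HLsmooth l z0 (Hball z0 ltac:(rewrite vnorm_vsub_self; lra)))). }
  assert (Sym : forall d mu c', pd (Fin.R n d) (pd (Fin.R n mu) (pd (Fin.R n c') F)) z0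
                              = pd (Fin.R n mu) (pd (Fin.R n d) (pd (Fin.R n c') F)) z0).
  { intros d mu c'. apply (Sch.schwarz_V (pd (Fin.R n c') F) z0 r); auto.
    - intros z Hz k. split. apply (SP z Hz [Fin.R n c'] k). intros k'. apply (SP z Hz [k; Fin.R n c'] k').
    - apply (SC [Fin.R n d; Fin.R n mu; Fin.R n c']).
    - apply (SC [Fin.R n mu; Fin.R n d; Fin.R n c']). }
  assert (ELC : forall sg b' c', pd b' (fun x' => pullback_metric L s x' sg c') x
     = pd (Fin.L n b') (pd (Fin.R n sg) (pd (Fin.R n c') F)) z0
       + fsum (fun mu => pd (Fin.R n mu) (pd (Fin.R n sg) (pd (Fin.R n c') F)) z0 * pd b' (fun x' => s x' mu) x)).
  { intros sg b' c'. unfold pullback_metric. rewrite HL.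
    assert (E : (fun x' => gmet n (fun x y => F (join x y)) x' (s x') sg c') = (fun x' => pd (Fin.R n sg) (pd (Fin.R n c') F) (join x' (s x')))).
    { apply functional_extensionality; intros x'. apply gmet_eq. }
    rewrite E. apply chain_section with r; auto.
    - intros z Hz k. apply (SP z Hz [Fin.R n sg; Fin.R n c'] k).
    - intros k. apply (SC [k; Fin.R n sg; Fin.R n c']).
    - intros mu. apply (proj1 (Hs mu [] x Ux) b'). }
  pose (C3 := fun k sg c' => pd (Fin.R n k) (pd (Fin.R n sg) (pd (Fin.R n c') F)) z0).
  pose (A := fun b' sg c' => pd (Fin.L n b') (pd (Fin.R n sg) (pd (Fin.R n c') F)) z0).
  pose (ds := fun b' mu => pd b' (fun x' => s x' mu) x).
  pose (N := fun nu b' => nlc n L nu b' x (s x)).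
  pose (g := ginv n L x (s x)).
  assert (ELC' : forall sg b' c', pd b' (fun x' => pullback_metric L s x' sg c') x
                  = A b' sg c' + fsum (fun mu => C3 mu sg c' * ds b' mu)) by exact ELC.
  assert (ECR : forall b' sg c', deltax n L b' (fun x' y' => gmet n L x' y' sg c') x (s x)
                  = A b' sg c' - fsum (fun nu => N nu b' * C3 nu sg c')).
  { intros b' sg c'. unfold A, N, C3, z0. rewrite HL. apply deltax_eq. }
  assert (ECa : forall mu b' c', cartan n L mu b' c' x (s x) = / 2 * C3 mu b' c').
  { intros. unfold C3, z0. rewrite HL. apply cartan_eq. }
  assert (Sym' : forall d mu c', C3 d mu c' = C3 mu d c') by exact Sym.
  assert (DS : forall b' mu, Dsec n L s b' mu x = ds b' mu + N mu b') by reflexivity.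
  assert (MG : forall a' sg, minv (pullback_metric L s x) a' sg = g a' sg) by reflexivity.
  assert (GI : ginv n L x (s x) = g) by reflexivity.
  clearbody C3 A ds N g.
  unfold levi_civita, chern_rund, cartan_up.
  rewrite GI.
  transitivity (fsum (fun sg => fsum (fun mu => / 2 * (g a sg * (C3 mu sg c * (ds b mu + N mu b)
       + C3 mu sg b * (ds c mu + N mu c) - C3 mu b c * (ds sg mu + N mu sg)))))).
  - rewrite <- Rmult_minus_distr_l, <- fsum_minus, <- fsum_scal. apply fsum_ext. intros sg. cbv beta.
    rewrite fsum_scal. f_equal. rewrite MG, !ELC', !ECR.
    apply (alg_inner (g a sg) (A b sg c) (A c sg b) (A sg b c) (fun mu => C3 mu sg c) (fun mu => C3 mu sg b)
      (fun mu => C3 mu b c) (fun mu => ds b mu) (fun mu => ds c mu) (fun mu => ds sg mu)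
      (fun mu => N mu b) (fun mu => N mu c) (fun mu => N mu sg)).
  - symmetry. rewrite <- fsum_minus.
    transitivity (fsum (fun mu => fsum (fun sg => / 2 * (g a sg * (C3 mu sg c * (ds b mu + N mu b)
       + C3 mu sg b * (ds c mu + N mu c) - C3 mu b c * (ds sg mu + N mu sg)))))).
    + apply fsum_ext. intros mu. cbv beta.
      rewrite <- !fsum_scal_r, <- fsum_plus, <- fsum_minus. apply fsum_ext. intros d.
      rewrite !ECa, !DS, (Sym' d mu c), (Sym' d mu b). ring.
    + apply (fsum_swap (fun mu sg => / 2 * (g a sg * (C3 mu sg c * (ds b mu + N mu b)
       + C3 mu sg b * (ds c mu + N mu c) - C3 mu b c * (ds sg mu + N mu sg))))).
Qed.
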